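(* Let $H_X\in\mathbb{F}_2^{m_X\times n}$ and $H_Z\in\mathbb{F}_2^{m_Z\times n}$, and let $k=n-\mathrm{rank}(H_X)-\mathrm{rank}(H_Z)$. Let $P\ge1$ and let $\hat H_X\in\mathbb{F}_2^{Pm_X\times Pn}$, $\hat H_Z\in\mathbb{F}_2^{Pm_Z\times Pn}$ be obtained by replacing each nonzero entry of $H_X$ and $H_Z$ by some $P\times P$ permutation matrix and each zero entry by the $P\times P$ zero matrix, and assume $\hat H_X\hat H_Z^{\mathsf T}=0$ over $\mathbb{F}_2$. Let $\hat k=Pn-\mathrm{rank}(\hat H_X)-\mathrm{rank}(\hat H_Z)$. Then \[ \hat k\ge k+(P-1)(n-m_X-m_Z). \] In particular, if $n=m_X+m_Z$, then $\hat k\ge k$.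
   Context: All ranks are over $\mathbb{F}_2$. The permutation matrices used for different entries may differ. *)

(* Defs.v *)
From HB Require Import structures.
From mathcomp Require Import all_boot all_order all_algebra all_fingroup.
Set Implicit Arguments. Unset Strict Implicit. Unset Printing Implicit Defensive.
Import GRing.Theory.
Local Open Scope ring_scope.

(* The result is the block matrix
   of size (m*P) x (n*P) (dimensions written as \sum_(i < m) P etc.). *)
Definition lift_mx (m n P : nat) (H : 'M['F_2]_(m, n))
  (s : 'I_m -> 'I_n -> 'S_P) :
  'M['F_2]_(\sum_(i < m) P, \sum_(j < n) P) :=
  \mxblock_(i < m, j < n)
     (if H i j != 0 then (perm_mx (s i j) : 'M['F_2]_(P, P)) else 0).

(* Main.v *)
Require Import Defs.
From HB Require Import structures.
From mathcomp Require Import all_boot all_order all_algebra all_fingroup.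
From mathcomp Require Import zify.
Import GRing.Theory.
Local Open Scope ring_scope.

Lemma F2_nz (x : 'F_2) : x != 0 -> x = 1.
Proof. by case: x => [[|[|k]] Hk] //= _; apply/val_inj. Qed.

Lemma F2_if (x : 'F_2) m n (D : 'M['F_2]_(m,n)) : (if x != 0 then D else 0) = x *: D.
Proof. by case: eqP => [->|/eqP/F2_nz ->]; rewrite ?scale0r ?scale1r. Qed.

Lemma const_perm P (s : 'S_P) :
  (const_mx 1 : 'M['F_2]_(1,P)) *m perm_mx s = const_mx 1.
Proof.
rewrite -[s]invgK -col_permE; apply/matrixP => i j; by rewrite !mxE.
Qed.

Lemma rank_lift m n P (H : 'M['F_2]_(m, n)) (s : 'I_m -> 'I_n -> 'S_P) :
  (0 < P)%N -> (\rank (lift_mx H s) <= \rank H + (m * P - m))%N.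
Proof.
move=> P0.
pose c : 'M['F_2]_(1,P) := const_mx 1.
pose L : 'M['F_2]_(m, \sum_(i < m) P) := \mxrow_(i < m) (delta_mx i 0 *m c).
pose R : 'M['F_2]_(n, \sum_(j < n) P) := \mxrow_(j < n) (delta_mx j 0 *m c).
have LA : L *m lift_mx H s = H *m R.
  rewrite /L /lift_mx mul_mxrow_mxblock /R mul_mxrow; apply: eq_mxrow => j.
  under eq_bigr do rewrite F2_if -scalemxAr -mulmxA const_perm.
  under eq_bigr do rewrite scalemxAl.
  rewrite -mulmx_suml mulmxA -colE; congr (_ *m _).
  apply/matrixP => a b; rewrite summxE (bigD1 a) //= big1 ?addr0.
    by rewrite !mxE ord1 !eqxx mulr1.
  by move=> i /negPf ia; rewrite !mxE eq_sym ia mulr0.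
have rL : \rank L = m.
  apply/eqP; rewrite eqn_leq rank_leq_row /=.
  idtac.
  pose k : 'I_P := Ordinal P0.
  pose R' : 'M['F_2]_(\sum_(i < m) P, m) := \mxcol_(i < m) delta_mx k i.
  have E : L *m R' = 1%:M.
    rewrite mul_mxrow_mxcol.
    have cd i : c *m delta_mx k i = delta_mx 0 i.
      rewrite -(mul_delta_mx (0:'I_1) k) mulmxA -colE.
      rewrite (_ : col k c = 1%:M) ?mul1mx //.
      by apply/matrixP => a b; rewrite !mxE !ord1.
    under eq_bigr => i _ do rewrite -mulmxA cd mul_delta_mx.
    apply/matrixP => a b; rewrite summxE (bigD1 a) //= big1 ?addr0.
      by rewrite !mxE eqxx /= eq_sym.
    by move=> i /negPf ia; rewrite !mxE eq_sym ia.
  by rewrite -{1}(mxrank1 'F_2 m) -E mxrankM_maxl.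
rewrite -mxrank_tr -(mxrank_mul_ker _ L^T) -trmx_mul LA mxrank_tr.
apply: leq_add; first exact: mxrankM_maxl.
apply: leq_trans (mxrankS (capmxSr _ _)) _.
by rewrite mxrank_ker mxrank_tr rL sum_nat_const card_ord mulnC.
Qed.

Theorem mainTheorem5 (mX mZ n P : nat) (HX : 'M['F_2]_(mX, n))
  (HZ : 'M['F_2]_(mZ, n)) (sX : 'I_mX -> 'I_n -> 'S_P)
  (sZ : 'I_mZ -> 'I_n -> 'S_P) :
  (1 <= P)%N ->
  lift_mx HX sX *m (lift_mx HZ sZ)^T = 0 ->
  let k : int := n%:Z - (\rank HX)%:Z - (\rank HZ)%:Z in
  let khat : int := (P * n)%:Z - (\rank (lift_mx HX sX))%:Z
                                - (\rank (lift_mx HZ sZ))%:Z in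
  k + (P%:Z - 1) * (n%:Z - mX%:Z - mZ%:Z) <= khat /\
  (n = (mX + mZ)%N -> k <= khat).
Proof.
move=> P1 _ k khat.
have hX := rank_lift _ _ _ HX sX P1; have hZ := rank_lift _ _ _ HZ sZ P1.
have hrX := rank_leq_row HX; have hrZ := rank_leq_row HZ.
move: hX hZ; rewrite /k /khat.
move: (\rank (lift_mx HX sX)) (\rank (lift_mx HZ sZ)) (\rank HX) (\rank HZ) hrX hrZ => a b c d.
move=> *; split; [|move=> En]; nia.
Qed.
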